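(* Let $n\geqslant 1$. Every $\lambda\subset\mathbb N^{3n}$ which is a partition with embedding dimension $h_\lambda(1)=3n$ and socle type $(0,0,0,n)$ has Hilbert–Samuel function $(1,3n,3n,n)$; in particular it is an M-partition of type $(3n,3n,n)$ and length $3$. Moreover \[ \alpha^{3n}_{3n,n,3}=\frac{(3n)!}{6^n\,n!}. \]
   Context: Let $\mathbb N=\mathbb Z_{\geqslant 0}$ with the componentwise order. A partition in $\mathbb N^k$ is a finite subset $\lambda\subset\mathbb N^k$ closed downward; $\mathrm P^k_d$ is the set of those of size $d$. The degree of a point is the sum of its coordinates; $\lambda_{=i}$, $\lambda_{\geqslant i}$ are the elements of degree $i$, resp. $\geqslant i$; the Hilbert–Samuel function is $h_\lambda(i)=|\lambda_{=i}|$, written as the tuple $(h_\lambda(0),h_\lambda(1),\dots,h_\lambda(\ell))$ with $\ell=\ell(\lambda)$ the maximal degree (the length); $h_\lambda(1)$ is the embedding dimension. $\mathrm{Soc}(\lambda)$ is the set of maximal elements; the socle type $(0,0,0,n)$ means all elements of $\mathrm{Soc}(\lambda)$ have degree $3$ and there are exactly $n$ of them. For positive integers $k,q,m$, an M-partition of type $(k,q,m)$ is $\lambda\in\mathrm P^k_{1+k+q+m}$ with $\mathrm{Soc}(\lambda)\subset\lambda_{\geqslant3}$, $h_\lambda(1)=k$, $h_\lambda(2)=q$, $\sum_{i\geqslant3}h_\lambda(i)=m$; $\alpha^k_{q,m,\ell}$ is the number of M-partitions of type $(k,q,m)$ and length $\ell$. *)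

(* Defs.v *)
From mathcomp Require Import all_boot all_order.
From mathcomp Require Import finmap.
Set Implicit Arguments. Unset Strict Implicit. Unset Printing Implicit Defensive.
Local Open Scope fset_scope.

Definition pt (k : nat) := {ffun 'I_k -> nat}.

Definition le_pt (k : nat) (x y : pt k) : bool := [forall i, x i <= y i].

Definition deg (k : nat) (x : pt k) : nat := \sum_(i < k) x i.

Definition is_partition (k : nat) (l : {fset pt k}) : Prop :=
  forall x y : pt k, y \in l -> le_pt x y -> x \in l.

Definition layer (k : nat) (l : {fset pt k}) (i : nat) : {fset pt k} :=
  [fset x in l | deg x == i].
Definition layer_ge (k : nat) (l : {fset pt k}) (i : nat) : {fset pt k} :=
  [fset x in l | i <= deg x].

Definition hilb (k : nat) (l : {fset pt k}) (i : nat) : nat := #|` layer l i|.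

Definition plength (k : nat) (l : {fset pt k}) : nat :=
  \max_(x <- enum_fset l) deg x.

Definition socle (k : nat) (l : {fset pt k}) : {fset pt k} :=
  [fset x in l | all (fun y => le_pt x y ==> (y == x)) (enum_fset l)].

Definition socle_type_0003 (k : nat) (l : {fset pt k}) (n : nat) : Prop :=
  (forall x, x \in socle l -> deg x = 3) /\ #|` socle l| = n.

Definition Mpartition (k q m : nat) (l : {fset pt k}) : Prop :=
  [/\ 0 < k /\ 0 < q /\ 0 < m,
      is_partition l /\ #|` l| = (1 + k + q + m)%N,
      (forall x, x \in socle l -> 3 <= deg x),
      hilb l 1 = k /\ hilb l 2 = q &
      #|` layer_ge l 3| = m].

Definition alpha_is (k q m ell N : nat) : Prop :=
  exists S : {fset {fset pt k}},
    (forall l : {fset pt k}, l \in S <-> (Mpartition q m l /\ plength l = ell))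
    /\ #|` S| = N.

(* Main.v *)
Require Import Defs.
From mathcomp Require Import all_boot all_order.
From mathcomp Require Import finmap.
From mathcomp Require Import zify.
Set Implicit Arguments. Unset Strict Implicit. Unset Printing Implicit Defensive.



Section Pts.
Variable k : nat.
Implicit Types (x y : pt k) (A B : {set 'I_k}).

Definition chi A : pt k := [ffun i => nat_of_bool (i \in A)].
Definition supp x : {set 'I_k} := [set i | x i != 0].

Lemma chiE A i : chi A i = (i \in A).
Proof. by rewrite ffunE. Qed.

Lemma deg_chi A : deg (chi A) = #|A|.
Proof.
rewrite /deg -sum1_card [RHS]big_mkcond /=; apply: eq_bigr => i _.
by rewrite chiE; case: (i \in A).
Qed.

Lemma le_pt_chi A B : le_pt (chi A) (chi B) = (A \subset B).
Proof.
apply/forallP/subsetP => [h i iA | h i].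
  by have := h i; rewrite !chiE iA; case: (i \in B).
by rewrite !chiE; case iA: (i \in A) => //; rewrite h.
Qed.

Lemma chi_inj : injective chi.
Proof.
move=> A B h; apply/setP => i.
by have := congr1 (fun f : pt k => f i) h; rewrite !chiE; do 2 case: (_ \in _).
Qed.

Lemma le_deg x y : le_pt x y -> deg x <= deg y.
Proof. by move/forallP => h; apply: leq_sum => i _; exact: h. Qed.

Lemma le_deg_eq x y : le_pt x y -> deg y <= deg x -> x = y.
Proof.
move/forallP => h hd.
have e : deg y = deg x + \sum_i (y i - x i).
  rewrite /deg -big_split; apply: eq_bigr => i _ /=. have := h i; lia.
have : \sum_i (y i - x i) == 0 by rewrite -(eqn_add2l (deg x)) -e addn0 eqn_leq hd le_deg //; apply/forallP.
rewrite sum_nat_eq0 => /forallP h2.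
apply/ffunP => i; have := h2 i; have := h i; move=> a /= /eqP b; lia.
Qed.

Lemma deg_supp x : deg x = #|supp x| + \sum_i (x i).-1.
Proof.
rewrite /deg -sum1_card [X in X + _]big_mkcond -big_split /=; apply: eq_bigr => i _.
rewrite inE; case: (x i) => //.
Qed.

Lemma supp_le_deg x : #|supp x| <= deg x.
Proof. by rewrite deg_supp leq_addr. Qed.

Lemma supp_eq_deg x : deg x <= #|supp x| -> x = chi (supp x).
Proof.
rewrite deg_supp -{2}[#|supp x|]addn0 leq_add2l leqn0 sum_nat_eq0 => /forallP h.
apply/ffunP => i; have := h i; rewrite chiE inE; case: (x i) => //= m /eqP; lia.
Qed.

Lemma le_chi x B : le_pt x (chi B) -> x = chi (supp x) /\ supp x \subset B.
Proof.
move/forallP => h; split.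
  apply/ffunP => i; have := h i; rewrite !chiE inE.
  by case: (i \in B); case: (x i) => // [[|]].
apply/subsetP => i; rewrite inE; have := h i; rewrite chiE.
by case: (i \in B); case: (x i).
Qed.

End Pts.

Section Fs.
Variable k : nat.
Implicit Types (x y : pt k) (l : {fset pt k}).

Lemma in_layer l i x : (x \in layer l i) = (x \in l) && (deg x == i).
Proof. by rewrite !inE. Qed.

Lemma in_layer_ge l i x : (x \in layer_ge l i) = (x \in l) && (i <= deg x).
Proof. by rewrite !inE. Qed.

Lemma in_socle l x :
  x \in socle l <-> x \in l /\ forall y, y \in l -> le_pt x y -> y = x.
Proof.
rewrite !inE; split.
  case/andP => -> /allP h; split => // y yl lxy.
  by have := h y yl; rewrite lxy => /eqP.
case=> -> h /=; apply/allP => y yl; apply/implyP => lxy.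
by rewrite (h y yl lxy).
Qed.

Lemma deg_le_plength l x : x \in l -> deg x <= plength l.
Proof. by move=> xl; apply: (leq_bigmax_seq x) => //. Qed.

Lemma plength_le l m : (forall x, x \in l -> deg x <= m) -> plength l <= m.
Proof. by move=> h; apply/bigmax_leqP_seq => x xl _; apply: h. Qed.

Lemma socle_above l x : x \in l -> exists2 s, s \in socle l & le_pt x s.
Proof.
move=> xl; pose M := plength l.
suff H : forall m x, x \in l -> M - deg x <= m -> exists2 s, s \in socle l & le_pt x s.
  exact: (H _ x xl (leqnn _)).
elim => [|m IH] {}x {}xl hm.
  all: case xs: (x \in socle l); first by exists x => //; apply/forallP.
  all: move: xs; rewrite !inE xl /= => /negbT; rewrite -has_predC => /hasP [y yl].
  all: rewrite /= negb_imply => /andP [lxy nyx].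
  all: have hdx : deg x < deg y by
      rewrite ltn_neqAle le_deg // andbT; apply: contra nyx => /eqP e;
      rewrite (le_deg_eq lxy) // e.
  all: have hy : deg y <= M by apply: deg_le_plength.
  by lia.
have [s ss lys] : exists2 s, s \in socle l & le_pt y s by apply: IH => //; lia.
exists s => //; apply/forallP => i; move/forallP: lxy => /(_ i); move/forallP: lys => /(_ i).
lia.
Qed.

End Fs.

Section Phi.
Variable k : nat.
Implicit Types (x y : pt k) (l : {fset pt k}) (A B C : {set 'I_k}) (P : {set {set 'I_k}}).

Definition TP (U : {set 'I_k}) :=
  [set P : {set {set 'I_k}} | partition P U && [forall B in P, #|B| == 3]].
Definition Dn P := [set A : {set 'I_k} | [exists B in P, A \subset B]].
Definition Phi P : {fset pt k} := [fset (@chi k A) | A in Dn P]%fset.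

Lemma card_chi_im (E : {set {set 'I_k}}) : #|` [fset (@chi k A) | A in E]%fset| = #|E|.
Proof.
rewrite card_imfset; last exact: chi_inj.
rewrite -(card_uniqP (enum_finmem_uniq _)); apply: eq_card => A.
by rewrite enum_finmemE.
Qed.

Lemma chi_in_im (E : {set {set 'I_k}}) A : (chi A \in [fset (@chi k A) | A in E]%fset) = (A \in E).
Proof. by rewrite mem_imfset //; exact: chi_inj. Qed.

Lemma mem_im (E : {set {set 'I_k}}) x : x \in [fset (@chi k A) | A in E]%fset -> exists2 A, A \in E & x = chi A.
Proof. by case/imfsetP => A /= hA ->; exists A. Qed.

Lemma inDn P A : (A \in Dn P) = [exists B in P, A \subset B].
Proof. by rewrite inE. Qed.

Lemma Phi_partition P : is_partition (Phi P).
Proof.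
move=> x y /mem_im [A hA ->] /le_chi [ex sA]; rewrite {1}ex.
rewrite chi_in_im inDn; move: hA; rewrite inDn => /existsP [B /andP [BP AB]].
by apply/existsP; exists B; rewrite BP (subset_trans sA AB).
Qed.

Section TPs.
Variable P : {set {set 'I_k}}.
Hypothesis hP : P \in TP setT.

Lemma TP_cover : cover P = setT.
Proof. by move: hP; rewrite inE => /andP [/and3P [/eqP -> _ _] _]. Qed.
Lemma TP_triv : trivIset P.
Proof. by move: hP; rewrite inE => /andP [/and3P [_ -> _] _]. Qed.
Lemma TP_set0 : set0 \notin P.
Proof. by move: hP; rewrite inE => /andP [/and3P [_ _ ->] _]. Qed.
Lemma TP_3 B : B \in P -> #|B| = 3.
Proof. by move: hP; rewrite inE => /andP [_ /forallP h] BP; move: (h B); rewrite BP => /eqP. Qed.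
Lemma TP_card : k = 3 * #|P|.
Proof.
have hp : partition P setT by move: hP; rewrite inE => /andP [].
have h := card_partition hp; rewrite cardsT card_ord in h.
transitivity (\sum_(B in P) #|B|); first exact: h.
rewrite (eq_bigr (fun _ => 3)); last by move=> B /TP_3.
by rewrite sum_nat_const mulnC.
Qed.

Lemma TP_uniq A B1 B2 : B1 \in P -> B2 \in P -> A != set0 -> A \subset B1 -> A \subset B2 -> B1 = B2.
Proof.
move=> h1 h2 /set0Pn [i iA] s1 s2.
rewrite -(def_pblock TP_triv h1 (subsetP s1 i iA)).
exact: (def_pblock TP_triv h2 (subsetP s2 i iA)).
Qed.

Lemma deg_Phi x : x \in Phi P -> deg x <= 3.
Proof.
case/mem_im => A; rewrite inDn => /existsP [B /andP [BP AB]] ->.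
by rewrite deg_chi -(TP_3 BP) subset_leq_card.
Qed.

Lemma socle_Phi A : (chi A \in socle (Phi P)) = (A \in P).
Proof.
apply/idP/idP.
  case/in_socle; rewrite chi_in_im inDn => /existsP [B /andP [BP AB]] h.
  have e : chi B = chi A.
    apply: h; last by rewrite le_pt_chi.
    by rewrite chi_in_im inDn; apply/existsP; exists B; rewrite BP subxx.
  by rewrite -(chi_inj e).
move=> AP; apply/in_socle; split.
  by rewrite chi_in_im inDn; apply/existsP; exists A; rewrite AP subxx.
move=> y /mem_im [A' hA' ->]; rewrite le_pt_chi => AA'.
move: hA'; rewrite inDn => /existsP [B /andP [BP A'B]].
have A0 : A != set0 by apply: contraNneq TP_set0 => <-.
have eAB := TP_uniq AP BP A0 (subxx _) (subset_trans AA' A'B).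
by congr chi; apply/eqP; rewrite eqEsubset AA' eAB A'B.
Qed.

Lemma socle_Phi_eq : socle (Phi P) = [fset (@chi k A) | A in P]%fset.
Proof.
apply/fsetP => x; apply/idP/idP.
  move=> xs; have : x \in Phi P by case/in_socle: xs.
  by case/mem_im => A _ e; move: xs; rewrite e socle_Phi chi_in_im.
by case/mem_im => A AP ->; rewrite socle_Phi.
Qed.

Definition Di i := [set A in Dn P | #|A| == i].

Lemma inDi i A : (A \in Di i) = (A \in Dn P) && (#|A| == i).
Proof. by rewrite /Di inE. Qed.

Lemma layer_Phi i : layer (Phi P) i = [fset (@chi k A) | A in Di i]%fset.
Proof.
apply/fsetP => x; rewrite in_layer; apply/idP/idP.
  by case/andP => /mem_im [A hA ->]; rewrite deg_chi chi_in_im inE hA.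
by case/mem_im => A; rewrite inE => /andP [hA hc] ->; rewrite chi_in_im hA deg_chi.
Qed.

Lemma hilb_Phi i : hilb (Phi P) i = #|Di i|.
Proof. by rewrite /hilb layer_Phi card_chi_im. Qed.

Lemma card_Di i : 0 < i -> #|Di i| = #|P| * 'C(3, i).
Proof.
move=> i0.
have e : forall A, \sum_(B in P) ((A \subset B) && (#|A| == i) : nat) = (A \in Di i).
  move=> A; rewrite inE inDn.
  case: (boolP [exists B in P, A \subset B]) => [/existsP [B0 /andP [B0P AB0]] | hn] /=.
    rewrite (bigD1 B0) //= AB0 /= big1 ?addn0 // => B /andP [BP nB].
    case AB: (A \subset B) => //=; case hA: (#|A| == i) => //.
    have A0 : A != set0 by apply/eqP => A0; move: hA; rewrite A0 cards0 => /eqP i0'; rewrite -i0' in i0.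
    by move: nB; rewrite (TP_uniq BP B0P A0 AB AB0) eqxx.
  rewrite big1 //= => B BP; case AB: (A \subset B) => //.
  by case/existsP: hn; exists B; rewrite BP.
rewrite -sum_nat_const.
transitivity (\sum_(B in P) #|[set A : {set 'I_k} | A \subset B & #|A| == i]|).
  rewrite (eq_bigr (fun B => \sum_(A : {set 'I_k}) ((A \subset B) && (#|A| == i) : nat))); last first.
    by move=> B _; rewrite -sum1_card big_mkcond /=; apply: eq_bigr => A _; rewrite inE; case: (_ && _).
  rewrite exchange_big /= (eq_bigr (fun A : {set 'I_k} => (A \in Di i) : nat)); last by move=> A _; rewrite e.
  by rewrite -sum1_card [LHS]big_mkcond; apply: eq_bigr => A _; case: (A \in Di i).
by apply: eq_bigr => B BP; rewrite cards_draws TP_3.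
Qed.

Lemma card_D0 : 0 < #|P| -> #|Di 0| = 1.
Proof.
case/card_gt0P => B BP; apply/eqP/cards1P; exists set0; apply/setP => A.
rewrite !inE cards_eq0; case: (boolP (A == set0)) => [/eqP -> | ] ; last by rewrite andbF.
by rewrite andbT; apply/existsP; exists B; rewrite BP sub0set.
Qed.

Lemma card_Phi : #|` Phi P| = #|Di 0| + #|Di 1| + #|Di 2| + #|Di 3|.
Proof.
rewrite card_chi_im -sum1_card big_mkcond /=.
have e : forall A, ((A \in Dn P) : nat) = \sum_(i < 4) (A \in Di i).
  move=> A; rewrite !big_ord_recr big_ord0 /= !inDi.
  case hA: (A \in Dn P) => //=.
  have : #|A| <= 3.
    by move: hA; rewrite inDn => /existsP [B /andP [BP AB]]; rewrite -(TP_3 BP) subset_leq_card.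
  by case: #|A| => [|[|[|[|]]]].
rewrite (eq_bigr (fun A => \sum_(i < 4) (A \in Di i) : nat)); last first.
  by move=> A _; rewrite -e; case: (A \in Dn P).
rewrite exchange_big !big_ord_recr big_ord0 /=.
by rewrite -!sum1_card ![\sum_(_ in Di _) _]big_mkcond.
Qed.

End TPs.
End Phi.

Section Count.
Variable k : nat.
Implicit Types (A B C U : {set 'I_k}) (P : {set {set 'I_k}}).

Lemma inTP U P : (P \in TP U) = partition P U && [forall B in P, #|B| == 3].
Proof. by rewrite inE. Qed.

Lemma TP0 : TP (set0 : {set 'I_k}) = [set set0].
Proof.
apply/setP => P; rewrite inTP inE; apply/idP/idP.
  case/andP => /and3P [/eqP cP _ P0] _; apply/eqP/setP => B; rewrite inE.
  apply/negbTE; apply: contra P0 => BP.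
  have : B \subset cover P by apply: bigcup_sup.
  by rewrite cP subset0 => /eqP <-.
move/eqP => ->; rewrite /partition /trivIset /cover !big_set0 cards0 !eqxx inE /=.
by apply/forallP => B; rewrite inE.
Qed.

Lemma block_sub P U B : partition P U -> B \in P -> B \subset U.
Proof. by case/and3P => /eqP <- _ _ BP; apply: bigcup_sup. Qed.

Lemma TP_step U x : x \in U ->
  #|TP U| = \sum_(C : {set 'I_k} | (C \subset U :\ x) && (#|C| == 2)) #|TP (U :\: (x |: C))|.
Proof.
move=> xU.
rewrite -sum1_card (partition_big (fun P => pblock P x :\ x)
   (fun C => (C \subset U :\ x) && (#|C| == 2))) /=; last first.
  move=> P; rewrite inTP => /andP [hp /forallP h3].
  have xc : x \in cover P by case/and3P: hp => /eqP ->.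
  have bP := pblock_mem xc.
  have := h3 (pblock P x); rewrite bP /= => /eqP c3.
  apply/andP; split.
    by apply: setSD; apply: block_sub hp bP.
  by move: c3; rewrite (cardsD1 x) mem_pblock xc => /eqP; rewrite eqSS.
apply: eq_bigr => C /andP [CU C2].
set B := x |: C.
have xC : x \notin C by apply/negP => xC'; have := subsetP CU x xC'; rewrite !inE eqxx.
have BU : B \subset U by rewrite subUset sub1set xU (subset_trans CU) ?subD1set.
have B3 : #|B| = 3 by rewrite cardsU1 xC (eqP C2).
have xB : x \in B by rewrite setU11.
have BnP : forall P', P' \in TP (U :\: B) -> B \notin P'.
  move=> P'; rewrite inTP => /andP [hp _]; apply/negP => BP'.
  by have := subsetP (block_sub hp BP') x xB; rewrite !inE eqxx.
rewrite -[RHS](card_in_imset (f := fun P' => B |: P')); last first.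
  move=> P1 P2 h1 h2 /= e.
  by rewrite -(setU1K (BnP _ h1)) -(setU1K (BnP _ h2)) e.
rewrite -sum1_card; apply: eq_bigl => P; apply/idP/idP.
  case/andP; rewrite inTP => /andP [hp /forallP h3] /eqP pC.
  have xc : x \in cover P by case/and3P: hp => /eqP ->.
  have bP := pblock_mem xc.
  have eB : pblock P x = B by rewrite /B -pC setD1K // mem_pblock.
  rewrite eB in bP.
  apply/imsetP; exists (P :\ B); last by rewrite setD1K.
  rewrite inTP; apply/andP; split.
    case/and3P: hp => /eqP cP tP P0; apply/and3P; split.
    - by rewrite coverD1 // cP.
    - by apply: trivIsetS tP; apply: subD1set.
    - by rewrite !inE negb_and P0 orbT.
  apply/forallP => B'; apply/implyP; rewrite !inE => /andP [_ B'P].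
  by have := h3 B'; rewrite B'P.
case/imsetP => P' hP' ->; have BP' := BnP _ hP'.
move: hP'; rewrite inTP => /andP [hp /forallP h3].
case/and3P: hp => /eqP cP tP P0.
have dB : {in P', forall B', [disjoint B & B']}.
  move=> B' B'P; rewrite disjoint_sym disjoints_subset; apply/subsetP => i iB'; rewrite inE.
  have : B' \subset cover P' by apply: bigcup_sup.
  by rewrite cP => /subsetP/(_ i iB'); rewrite !inE => /andP [].
have [tB _] := trivIsetU1 dB tP P0.
apply/andP; split.
  rewrite inTP; apply/andP; split.
    apply/and3P; split => //.
    - rewrite /cover big_setU1 //= -/(cover P') cP.
      apply/eqP/setP => i; rewrite in_setU in_setD; case iB: (i \in B) => //=.
      by rewrite (subsetP BU i iB).
    - rewrite !inE negb_or P0 andbT; apply: contraTneq xB => <-; by rewrite inE.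
  apply/forallP => B'; apply/implyP; rewrite !inE => /orP [/eqP -> | B'P].
    by rewrite B3.
  by have := h3 B'; rewrite B'P.
by rewrite (def_pblock tB (setU11 _ _) xB) /B setU1K.
Qed.

Lemma bin2_mul2 n : 'C(n.+1, 2) * 2 = n.+1 * n.
Proof.
elim: n => // n IH; rewrite binS bin1 mulnDl IH; lia.
Qed.

Lemma card_TP m U : #|U| = 3 * m -> #|TP U| * (6 ^ m * m`!) = (3 * m)`!.
Proof.
elim: m U => [|m IH] U hU.
  by move: hU; rewrite muln0 => /cards0_eq ->; rewrite TP0 cards1.
have : 0 < #|U| by rewrite hU; lia.
case/card_gt0P => x xU.
rewrite (TP_step xU) big_distrl /=.
rewrite (eq_bigr (fun _ => (3 * m)`! * (6 * m.+1))); last first.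
  move=> C /andP [CU C2].
  have xC : x \notin C by apply/negP => xC'; have := subsetP CU x xC'; rewrite !inE eqxx.
  have hB : #|x |: C| = 3 by rewrite cardsU1 xC (eqP C2).
  have sB : x |: C \subset U by rewrite subUset sub1set xU (subset_trans CU) ?subD1set.
  rewrite -(IH (U :\: (x |: C))); last by rewrite cardsDS // hU hB; lia.
  rewrite expnS factS; move: (#|TP _|) (6 ^ m) (m`!) => a b c; nia.
rewrite (eq_bigl (fun C : {set 'I_k} => C \in [set C : {set 'I_k} | C \subset U :\ x & #|C| == 2])); last first.
  by move=> C; rewrite inE.
rewrite sum_nat_const cards_draws.
have hUx : #|U :\ x| = (3 * m + 1).+1 by move: hU; rewrite (cardsD1 x) xU; lia.
rewrite hUx.
have e := bin2_mul2 (3 * m + 1).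
have -> : (3 * m.+1)`! = (3 * m + 3) * (3 * m + 2) * (3 * m + 1) * (3 * m)`!.
  have -> : 3 * m.+1 = (3 * m).+3 by lia.
  rewrite !factS; lia.
move: e; set c := 'C(_, 2); set F := (3 * m)`!; move=> e.
have -> : c * (F * (6 * m.+1)) = (c * 2) * F * (3 * m + 3) by lia.
by rewrite e; lia.
Qed.

End Count.

Section Core.
Variable k : nat.
Implicit Types (x y s : pt k) (l : {fset pt k}) (A B : {set 'I_k}).

Lemma cardfs_def l : #|` l| = size (enum_fset l).
Proof. by []. Qed.

Lemma core l :
  is_partition l -> hilb l 1 = k -> (forall s, s \in socle l -> deg s = 3) ->
  3 * #|` socle l| = k -> exists2 P, P \in TP setT & l = Phi P.
Proof.
move=> hpart h1 hdeg hcard.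
have units : forall i, chi [set i] \in l.
  move=> i; apply/negPn/negP => ni.
  pose E1 := [set [set j] | j in [set~ i]].
  have sub : (layer l 1 `<=` [fset (@chi k A) | A in E1])%fset.
    apply/fsubsetP => x; rewrite in_layer => /andP [xl /eqP d1].
    have sn : supp x != set0.
      apply/negP => /eqP s0.
      have : deg x = 0.
        rewrite /deg big1 // => j _; apply/eqP.
        have : j \notin supp x by rewrite s0 inE.
        by rewrite inE negbK.
      by rewrite d1.
    have s1 : #|supp x| = 1.
      have := supp_le_deg x; rewrite d1; move: sn; rewrite -card_gt0; lia.
    have ex : x = chi (supp x) by apply: supp_eq_deg; rewrite s1 d1.
    case/cards1P: (introT eqP s1) => j ej.
    rewrite ex ej chi_in_im; apply/imsetP; exists j => //.
    rewrite !inE; apply: contraNneq ni => eji.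
    by rewrite -eji -ej -ex.
  have := fsubset_leq_card sub; rewrite card_chi_im.
  have : layer l 1 = layer l 1 by [].
  move=> _ hle.
  have := leq_trans hle (leq_imset_card _ _).
  rewrite cardsC1 card_ord; move: h1; rewrite /hilb => ->.
  by have := ltn_ord i; lia.
pose Q := [set A : {set 'I_k} | A \in [seq supp s | s <- enum_fset (socle l)]].
have inQ : forall A, A \in Q -> exists2 s, s \in socle l & A = supp s.
  by move=> A; rewrite inE => /mapP [s ss ->]; exists s.
have Qin : forall s, s \in socle l -> supp s \in Q.
  by move=> s ss; rewrite inE; apply: map_f.
have cQ : #|Q| <= #|` socle l|.
  rewrite cardsE -(size_map (@supp k)); exact: card_size.
have Q3 : forall A, A \in Q -> #|A| <= 3.
  by move=> A /inQ [s ss ->]; rewrite -(hdeg s ss) supp_le_deg.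
have coverQ : cover Q = setT.
  apply/setP => i; rewrite inE; apply/bigcupP.
  have [s ss ls] := socle_above (units i).
  exists (supp s); first exact: Qin.
  move/forallP: ls => /(_ i); rewrite chiE inE eqxx => hi.
  by rewrite inE; move: hi; case: (s i).
have hsum : \sum_(A in Q) #|A| <= 3 * #|Q|.
  by rewrite mulnC -sum_nat_const; apply: leq_sum.
have hk : k <= \sum_(A in Q) #|A|.
  by have := (leq_card_cover Q).1; rewrite coverQ cardsT card_ord.
have tQ : trivIset Q.
  rewrite -(leq_card_cover Q).2 coverQ cardsT card_ord eqn_leq hk /=.
  have h3 : 3 * #|Q| <= 3 * #|` socle l| by rewrite leq_mul2l cQ orbT.
  by apply: (leq_trans hsum); apply: (leq_trans h3); rewrite hcard.
have Q3' : forall A, A \in Q -> #|A| = 3.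
  have e0 : \sum_(A in Q) (3 - #|A|) == 0.
    rewrite sumnB // sum_nat_const; lia.
  move: e0; rewrite sum_nat_eq0 => /forallP h A AQ.
  have := h A; rewrite AQ /=; have := Q3 A AQ.
  by move=> a; rewrite subn_eq0 => b; apply/eqP; rewrite eqn_leq a b.
have QTP : Q \in TP setT.
  rewrite inTP; apply/andP; split.
    apply/and3P; split; [by rewrite coverQ | by [] |].
    by apply/negP => /Q3'; rewrite cards0.
  by apply/forallP => A; apply/implyP => /Q3' ->.
have schi : forall s, s \in socle l -> s = chi (supp s).
  by move=> s ss; apply: supp_eq_deg; rewrite (hdeg s ss) (Q3' _ (Qin s ss)).
exists Q => //; apply/fsetP => x; apply/idP/idP.
  move=> xl; have [s ss lxs] := socle_above xl.
  rewrite (schi s ss) in lxs; case: (le_chi lxs) => ex sx.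
  rewrite ex chi_in_im inDn; apply/existsP; exists (supp s).
  by rewrite Qin.
case/mem_im => A; rewrite inDn => /existsP [B /andP [BQ AB]] ->.
have [s ss eB] := inQ B BQ.
apply: (hpart _ (chi B)); last by rewrite le_pt_chi.
by rewrite eB -schi //; case/in_socle: ss.
Qed.

End Core.

Section Stats.
Variable k : nat.
Variable P : {set {set 'I_k}}.
Hypothesis hP : P \in TP setT.
Hypothesis hP0 : 0 < #|P|.

Lemma stats :
  [/\ hilb (Phi P) 0 = 1 /\ hilb (Phi P) 1 = 3 * #|P|,
      hilb (Phi P) 2 = 3 * #|P| /\ hilb (Phi P) 3 = #|P|,
      plength (Phi P) = 3 /\ #|` Phi P| = 1 + 3 * #|P| + 3 * #|P| + #|P|,
      #|` layer_ge (Phi P) 3| = #|P| &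
      (forall x, x \in socle (Phi P) -> deg x = 3) /\ #|` socle (Phi P)| = #|P|].
Proof.
have c1 := card_Di hP (isT : 0 < 1).
have c2 := card_Di hP (isT : 0 < 2).
have c3 := card_Di hP (isT : 0 < 3).
have c0 := card_D0 hP0.
rewrite !hilb_Phi // c0 c1 c2 c3 /=.
have b1 : 'C(3, 1) = 3 by []. have b2 : 'C(3, 2) = 3 by []. have b3 : 'C(3, 3) = 1 by [].
rewrite b1 b2 b3; split.
- by rewrite mulnC.
- by rewrite mulnC muln1.
- split; last by rewrite (card_Phi hP) c0 c1 c2 c3 b1 b2 b3 muln1 (mulnC _ 3).
  apply/eqP; rewrite eqn_leq; apply/andP; split.
    by apply: plength_le => x; apply: deg_Phi.
  case/card_gt0P: hP0 => B BP.
  have : chi B \in Phi P by rewrite chi_in_im inDn; apply/existsP; exists B; rewrite BP subxx.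
  by move/deg_le_plength; rewrite deg_chi (TP_3 hP BP).
- have -> : layer_ge (Phi P) 3 = layer (Phi P) 3.
    apply/fsetP => x; rewrite in_layer_ge in_layer.
    case xP: (x \in Phi P) => //=; have := deg_Phi hP xP; lia.
  by rewrite -/(hilb _ 3) hilb_Phi // c3 b3 muln1.
- split; last by rewrite (socle_Phi_eq hP) card_chi_im.
  by move=> x; rewrite (socle_Phi_eq hP) => /mem_im [B BP ->]; rewrite deg_chi (TP_3 hP BP).
Qed.

End Stats.
Unset Implicit Arguments. Set Strict Implicit. Set Printing Implicit Defensive.

Theorem proposition5p1 (n : nat) (hn : 1 <= n) :
  (forall l : {fset pt (3 * n)},
      is_partition l -> hilb l 1 = 3 * n -> socle_type_0003 l n ->
      [/\ hilb l 0 = 1 /\ hilb l 1 = 3 * n,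
          hilb l 2 = 3 * n /\ hilb l 3 = n,
          plength l = 3 &
          Mpartition (3 * n) n l])
  /\ alpha_is (3 * n) (3 * n) n 3 ((3 * n)`! %/ (6 ^ n * n`!)).
Proof.
have fromP : forall P : {set {set 'I_(3 * n)}}, P \in TP setT ->
   [/\ hilb (Phi P) 0 = 1 /\ hilb (Phi P) 1 = 3 * n,
          hilb (Phi P) 2 = 3 * n /\ hilb (Phi P) 3 = n,
          plength (Phi P) = 3 &
          Mpartition (3 * n) n (Phi P)].
  move=> P hP.
  have eP : #|P| = n.
    have := TP_card hP; move=> e; apply/eqP; rewrite -(eqn_pmul2l (isT : 0 < 3)) -e //.
  have hP0 : 0 < #|P| by rewrite eP.
  have [[h0 h1] [h2 h3] [hl hc] hg [hs hsc]] := stats hP hP0.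
  rewrite eP in h1 h2 h3 hc hg.
  split => //.
  split => //.
  - by split => //; rewrite muln_gt0.
  - by split => //; apply: Phi_partition.
  - by move=> x /hs ->.
have core' : forall l : {fset pt (3 * n)}, is_partition l -> hilb l 1 = 3 * n ->
    (forall s, s \in socle l -> deg s = 3) -> #|` socle l| = n ->
    exists2 P, P \in TP setT & l = Phi P.
  by move=> l hp h1 hd hc; apply: core => //; rewrite hc.
split.
  move=> l hp h1 [hd hc].
  by have [P PT ->] := core' l hp h1 hd hc; apply: fromP.
pose S := [fset (@Phi (3 * n) P) | P in TP setT]%fset.
exists S; split.
  move=> l; split.
    by case/imfsetP => P /= PT ->; have [_ _ ? ?] := fromP P PT.
  case=> [[_ [hp hcard] hs3 [h1 h2] hg] hl].
  have hd : forall s, s \in socle l -> deg s = 3.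
    move=> s ss; apply/eqP; rewrite eqn_leq hs3 // andbT.
    have sl : s \in l by case/in_socle: ss.
    by have := deg_le_plength sl; rewrite hl.
  have eS : socle l = layer_ge l 3.
    apply/fsetP => x; rewrite in_layer_ge; apply/idP/andP.
      by move=> xs; split; [case/in_socle: xs | rewrite hd].
    case=> xl x3; apply/in_socle; split => // y yl lxy.
    symmetry; apply: le_deg_eq lxy _.
    by apply: (leq_trans _ x3); have := deg_le_plength yl; rewrite hl.
  have [P PT ->] := core' l hp h1 hd ltac:(by rewrite eS).
  exact: in_imfset.
rewrite card_in_imfset; last first.
  move=> P1 P2 /= h1 h2 e; apply/setP => A.
  by rewrite -(socle_Phi h1) -(socle_Phi h2) e.
rewrite -(card_uniqP (enum_finmem_uniq _)).
have -> : #|enum_finmem (mem (TP [set: 'I_(3 * n)]))| = #|TP [set: 'I_(3 * n)]|.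
  by apply: eq_card => P; rewrite enum_finmemE.
have := @card_TP (3 * n) n [set: 'I_(3 * n)]; rewrite cardsT card_ord => /(_ erefl) <-.
by rewrite mulnK // muln_gt0 expn_gt0 fact_gt0.
Qed.
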